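(* Let $d, N, r$ be positive integers, let $\|\cdot\|$ be any norm on $\mathbb{R}^d$ with unit ball $B = \{v \in \mathbb{R}^d : \|v\| \le 1\}$, and let $V_1, \dots, V_N$ be finite subsets of $B$ with $|V_i| \ge r$ for all $i \in [N]$. Then there is an $r$-selection $\chi$ of $(V_i)_{i\in[N]}$ with \[ \max_{n \in [N]} \max_{\ell \in [r]} \Big\| \sum_{i \in [n]} \Big( \chi(i,\ell) - \frac{1}{|V_i|} \sum_{v \in V_i} v \Big) \Big\| \le 5d. \]
   Context: $[n] = \{1, \dots, n\}$. An $r$-selection of $(V_i)_{i \in [N]}$ is a mapping $\chi : [N] \times [r] \to \mathbb{R}^d$ such that for every $i \in [N]$ the set $\chi(i,[r]) = \{\chi(i,\ell) : \ell \in [r]\}$ is an $r$-element subset of $V_i$ (so $\chi(i,1),\dots,\chi(i,r)$ are $r$ distinct elements of $V_i$). *)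

(* Defs.v *)
From HB Require Import structures.
From mathcomp Require Import all_boot all_order all_algebra.
From mathcomp Require Import reals.
From mathcomp Require Import finmap.
Set Implicit Arguments. Unset Strict Implicit. Unset Printing Implicit Defensive.
Import Order.TTheory GRing.Theory Num.Theory.
Local Open Scope ring_scope.

Definition is_norm (R : realType) (d : nat) (nrm : 'rV[R]_d -> R) : Prop :=
  [/\ forall v, 0 <= nrm v,
      forall v, nrm v = 0 -> v = 0,
      forall (a : R) v, nrm (a *: v) = `|a| * nrm v
    & forall u v, nrm (u + v) <= nrm u + nrm v].

Definition r_selection (R : realType) (d N r : nat)
  (V : 'I_N -> {fset 'rV[R]_d}) (chi : 'I_N -> 'I_r -> 'rV[R]_d) : Prop :=
  forall i : 'I_N, injective (chi i) /\ forall l : 'I_r, chi i l \in V i.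

Definition fset_mean (R : realType) (d : nat) (V : {fset 'rV[R]_d}) : 'rV[R]_d :=
  (#|` V|%:R)^-1 *: \sum_(v <- V) v.

(* Main.v *)
Require Import Defs.
From HB Require Import structures.
From mathcomp Require Import all_boot all_order all_algebra.
From mathcomp Require Import finmap reals.
From mathcomp Require Import zify ring lra.
From Stdlib Require Import Classical.
Set Implicit Arguments. Unset Strict Implicit. Unset Printing Implicit Defensive.
Import Order.TTheory GRing.Theory Num.Theory.
Local Open Scope ring_scope.

Lemma dep_fun (R : realType) D n (f : 'I_n -> 'rV[R]_D) : (D < n)%N ->
  exists k : 'I_n -> R, \sum_(i < n) k i *: f i = 0 /\ exists i, k i != 0.
Proof.
move=> hD.
pose M := \matrix_(i < n, j < D) f i 0 j.
have nf : kermx M != 0.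
  rewrite kermx_eq0 /row_free; apply/negP => /eqP e.
  by have := rank_leq_col M; rewrite e leqNgt hD.
have [j hj] : exists j, row j (kermx M) != 0.
  apply: NNPP => hn; move/negP: nf; apply; apply/eqP/matrixP => a b.
  have := hn; move/not_ex_all_not/(_ a)/negP; rewrite negbK => /eqP/rowP/(_ b).
  by rewrite !mxE.
exists (fun i => row j (kermx M) 0 i); split.
  have := mulmx_ker M => /(congr1 (row j)); rewrite row_mul row0 mulmx_sum_row.
  move=> e; apply: etrans e; apply: eq_bigr => i _; congr (_ *: _); apply/rowP => b.
  by rewrite !mxE.
apply: NNPP => hn; move/eqP: hj; apply; apply/rowP => b.
have := hn; move/not_ex_all_not/(_ b)/negP; rewrite negbK => /eqP ->.
by rewrite mxE.
Qed.

Lemma int_gap (R : realType) (a b : nat) (x : R) :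
  0 < x -> x < 1 -> x + a%:R = b%:R -> False.
Proof.
move=> h0 h1 e; case: (leqP b a) => h.
  have : (b%:R <= a%:R :> R) by rewrite ler_nat.
  lra.
have : ((a.+1)%:R <= b%:R :> R) by rewrite ler_nat.
rewrite -natr1; lra.
Qed.

Lemma sum01_nat (R : realType) (X : eqType) (l : seq X) (P : pred X) (f : X -> R) :
  (forall v, v \in l -> P v -> f v = 0 \/ f v = 1) ->
  exists c : nat, \sum_(v <- l | P v) f v = c%:R.
Proof.
elim: l => [|a l IH] h; first by exists 0%N; rewrite big_nil.
have [c hc] := IH (fun v hv => h v (@mem_behead _ (a :: l) _ hv)).
rewrite big_cons hc; case: ifP => hP; last by exists c.
case: (h a (mem_head _ _) hP) => ->; first by exists c; rewrite add0r.
by exists c.+1; rewrite -natr1 addrC.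
Qed.

Lemma sum_eqw (R : realType) (X : eqType) (V : lmodType R) (l : seq X) (w : X)
  (h : X -> V) : uniq l -> w \in l ->
  \sum_(v <- l) (v == w)%:R *: h v = h w.
Proof.
move=> ul wl; rewrite (bigD1_seq w) //= eqxx scale1r big1 ?addr0 //.
by move=> v /negPf ->; rewrite scale0r.
Qed.

Lemma sum_eqw1 (R : realType) (X : eqType) (l : seq X) (w : X) :
  uniq l -> w \in l -> \sum_(v <- l) (v == w)%:R = 1 :> R.
Proof.
move=> ul wl; have := sum_eqw (fun _ : X => (1 : R^o)) ul wl.
by under eq_bigr do rewrite /GRing.scale /= mulr1.
Qed.

Lemma count_lt (X : eqType) (a b : pred X) (l : seq X) x :
  subpred a b -> x \in l -> b x -> ~~ a x -> (count a l < count b l)%N.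
Proof.
move=> sab; elim: l => [//|c l IH] /=; rewrite inE => /orP [/eqP <-|hl] hb ha.
  by rewrite hb (negPf ha) add0n add1n ltnS sub_count.
have := IH hl hb ha; case hac: (a c); first by rewrite (sab _ hac); lia.
case: (b c) => /=; lia.
Qed.

Lemma seq_argmin (R : realType) (X : eqType) (f : X -> R) (l : seq X) x0 :
  x0 \in l -> exists x, x \in l /\ forall x', x' \in l -> f x <= f x'.
Proof.
elim: l x0 => [//|c l IH] x0 _.
case: l IH => [|c' l] IH.
  by exists c; split; [exact: mem_head | move=> x'; rewrite inE => /eqP ->].
have [x [hx hm]] := IH c' (mem_head _ _).
case: (leP (f c) (f x)) => h.
  exists c; split; first exact: mem_head.
  move=> x'; rewrite inE => /orP [/eqP ->//|/hm]; exact: le_trans.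
exists x; split; first by rewrite inE hx orbT.
move=> x'; rewrite inE => /orP [/eqP ->|/hm //]; exact: ltW.
Qed.

Section Round.
Variable R : realType.
Variables d N : nat.
Variable T : 'I_N -> {fset 'rV[R]_d}.
Variable s : 'I_N -> nat.

Definition frac (x : R) := (0 < x) && (x < 1).
Definition boxP (y : 'I_N -> 'rV[R]_d -> R) :=
  forall i v, v \in T i -> 0 <= y i v <= 1.
Definition rowsP (y : 'I_N -> 'rV[R]_d -> R) :=
  forall i, \sum_(v <- T i) y i v = (s i)%:R.
Definition fc (A : pred 'I_N) (y : 'I_N -> 'rV[R]_d -> R) :=
  (\sum_(i < N | A i) count (fun v => frac (y i v)) (T i))%N.
Definition wsum D (A : pred 'I_N) (g : 'I_N -> 'rV[R]_d -> 'rV[R]_D)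
  (y : 'I_N -> 'rV[R]_d -> R) :=
  \sum_(i < N | A i) \sum_(v <- T i) y i v *: g i v.
Definition refines (A : pred 'I_N) (y' y : 'I_N -> 'rV[R]_d -> R) :=
  forall i v, v \in T i -> ~~ A i || ~~ frac (y i v) -> y' i v = y i v.

Section Step.
Variable D : nat.
Variable A : pred 'I_N.
Variable g : 'I_N -> 'rV[R]_d -> 'rV[R]_D.
Variable y : 'I_N -> 'rV[R]_d -> R.
Hypothesis hb : boxP y.
Hypothesis hr : rowsP y.

Definition F i := [seq v <- T i | frac (y i v)].
Definition piv i := head 0 (F i).
Definition Dirs := [seq (i, v) | i <- enum A, v <- behead (F i)].
Definition delta (p : 'I_N * 'rV[R]_d) i v : R :=
  (p.1 == i)%:R * ((v == p.2)%:R - (v == piv i)%:R).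
Definition phi (p : 'I_N * 'rV[R]_d) := g p.1 p.2 - g p.1 (piv p.1).

Lemma F_ne1 i : size (F i) != 1%N.
Proof.
apply/negP => /eqP h1.
case hF: (F i) h1 => [|w [|w' l]] // _.
have hw : w \in F i by rewrite hF mem_head.
move: hw; rewrite mem_filter => /andP [fw wT].
have e1 : \sum_(v <- T i | frac (y i v)) y i v = y i w.
  by rewrite -big_filter -/(F i) hF big_seq1.
have [c hc] : exists c : nat, \sum_(v <- T i | ~~ frac (y i v)) y i v = c%:R.
  apply: sum01_nat => v vT nf; move: (hb vT) nf; rewrite /frac => /andP [h0 h1].
  rewrite negb_and -!leNgt => /orP [h|h]; [left|right]; apply/eqP.
    by rewrite eq_le h0 h.
  by rewrite eq_le h1 h.
have := hr i; rewrite (bigID (fun v => frac (y i v))) /= e1 hc => e.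
move/andP: fw => [f0 f1]; exact: int_gap f0 f1 e.
Qed.

Lemma F_uniq i : uniq (F i).
Proof. exact/filter_uniq/fset_uniq. Qed.

Lemma behead_prop i v : v \in behead (F i) ->
  [/\ v \in F i, piv i \in F i & v != piv i].
Proof.
rewrite /piv; have := F_uniq i.
case: (F i) => [//|w l] /= /andP [wl _] vl.
rewrite !inE vl orbT eqxx; split => //.
by apply/eqP => e; rewrite -e vl in wl.
Qed.

Lemma memDirs p : p \in Dirs -> A p.1 /\ p.2 \in behead (F p.1).
Proof. by case/allpairsPdep => i [v [hi hv ->]]; rewrite mem_enum in hi. Qed.

Lemma Dirs_uniq : uniq Dirs.
Proof.
apply: allpairs_uniq_dep; first exact: enum_uniq.
  by move=> i _; have := F_uniq i; case: (F i) => //= w l /andP [].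
by move=> [x a] [x' b] _ _ /= [-> ->].
Qed.

Lemma size_Dirs : (fc A y <= 2 * size Dirs)%N.
Proof.
rewrite /Dirs size_allpairs_dep sumnE big_map big_enum /= /fc big_distrr /=.
apply: leq_sum => i _; rewrite -size_filter -/(F i).
rewrite size_behead; have := F_ne1 i; case: (size (F i)) => [|[|n]] //= _.
lia.
Qed.


Section Zdir.
Variable p0 : 'I_N * 'rV[R]_d.
Variable k : 'I_(size Dirs) -> R.
Hypothesis hk : \sum_(j < size Dirs) k j *: phi (nth p0 Dirs j) = 0.
Variable j0 : 'I_(size Dirs).
Hypothesis hj0 : k j0 != 0.

Definition z i v := \sum_(j < size Dirs) k j * delta (nth p0 Dirs j) i v.

Lemma z_out i v : ~~ (A i && (v \in F i)) -> z i v = 0.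
Proof.
move=> h; apply: big1 => j _.
have /memDirs [hA hbh] := mem_nth p0 (ltn_ord j).
move: hA hbh; set p := nth p0 Dirs j => hA hbh.
have [hpF hpiv _] := behead_prop hbh.
rewrite /delta; case: eqP => [e|_]; last by rewrite mul0r mulr0.
subst i; rewrite hA /= in h.
have h1 : v != p.2 by apply: contraNneq h => ->.
have h2 : v != piv p.1 by apply: contraNneq h => ->.
by rewrite (negPf h1) (negPf h2) subrr mulr0 mulr0.
Qed.

Lemma z_row i : \sum_(v <- T i) z i v = 0.
Proof.
rewrite /z exchange_big /=; apply: big1 => j _; rewrite -mulr_sumr.
have /memDirs [hA hbh] := mem_nth p0 (ltn_ord j).
move: hA hbh; set p := nth p0 Dirs j => hA hbh.
have [hpF hpiv _] := behead_prop hbh.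
rewrite /delta -mulr_sumr; case: eqP => [e|_]; last by rewrite mul0r mulr0.
rewrite sumrB -e !sum_eqw1 ?subrr ?mulr0 ?mul1r //; try exact: fset_uniq.
  by move: hpiv; rewrite mem_filter => /andP [].
by move: hpF; rewrite mem_filter => /andP [].
Qed.

Lemma z_w : \sum_(i < N | A i) \sum_(v <- T i) z i v *: g i v = 0.
Proof.
rewrite -[RHS]hk.
rewrite (eq_bigr (fun i => \sum_(j < size Dirs)
   \sum_(v <- T i) (k j * delta (nth p0 Dirs j) i v) *: g i v)); last first.
  move=> i _; rewrite exchange_big /=; apply: eq_bigr => v _.
  by rewrite /z scaler_suml.
rewrite exchange_big /=; apply: eq_bigr => j _.
have /memDirs [hA hbh] := mem_nth p0 (ltn_ord j).
move: hA hbh; set p := nth p0 Dirs j => hA hbh.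
have [hpF hpiv _] := behead_prop hbh.
rewrite (bigD1 p.1) //= [X in _ + X]big1 ?addr0; last first.
  move=> i /andP [_ hi]; apply: big1 => v _.
  by rewrite /delta eq_sym (negPf hi) mul0r mulr0 scale0r.
rewrite /delta eqxx /= mulr1n.
under eq_bigr do rewrite mul1r.
under eq_bigr do rewrite -scalerA.
rewrite -scaler_sumr /phi; congr (_ *: _).
under eq_bigr do rewrite scalerBl.
have hpT : p.2 \in T p.1 by move: hpF; rewrite mem_filter => /andP [].
have hpivT : piv p.1 \in T p.1 by move: hpiv; rewrite mem_filter => /andP [].
by rewrite sumrB !sum_eqw //; exact: fset_uniq.
Qed.

Lemma z_nz : exists i v, [/\ A i, v \in F i & z i v != 0].
Proof.
have /memDirs [hA hbh] := mem_nth p0 (ltn_ord j0).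
move: hA hbh; set p := nth p0 Dirs j0 => hA hbh.
have [hpF hpiv hne] := behead_prop hbh.
exists p.1, p.2; split => //.
rewrite /z (bigD1 j0) //= big1 ?addr0.
  by rewrite -/p /delta eqxx (negPf hne) eqxx /= subr0 mulr1n !mulr1.
move=> j hj; set q := nth p0 Dirs j.
have hq : q != p by rewrite /q /p nth_uniq ?ltn_ord ?Dirs_uniq.
rewrite /delta (negPf hne) subr0.
case: eqP => [e1|_]; last by rewrite mul0r mulr0.
case: eqP => [e2|_]; last by rewrite /= mulr0n !mulr0.
by move: hq; rewrite [q]surjective_pairing [p]surjective_pairing e1 e2 eqxx.
Qed.

End Zdir.

Lemma step_exists : (2 * D < fc A y)%N -> exists y', [/\ boxP y', rowsP y',
  wsum A g y' = wsum A g y, refines A y' y & (fc A y' < fc A y)%N].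
Proof.
move=> hfc.
have hD : (D < size Dirs)%N by have := size_Dirs; lia.
have [p0 _] : exists p0, p0 \in Dirs.
  by move: hD; case: Dirs => // p l _; exists p; exact: mem_head.
have [k [hk [j0 hj0]]] := dep_fun (fun j : 'I_(size Dirs) => phi (nth p0 Dirs j)) hD.
pose zf := z p0 k.
have [i0 [v0 [hA0 hF0 hz0]]] := z_nz p0 hj0.
pose Cand := [seq p <- [seq (i, v) | i <- enum A, v <- F i] | zf p.1 p.2 != 0].
have memC : forall i v, A i -> v \in F i -> zf i v != 0 -> (i, v) \in Cand.
  move=> i v hA hv hz; rewrite mem_filter /= hz /=.
  by apply/allpairsPdep; exists i, v; split => //; rewrite mem_enum.
have memC' : forall p, p \in Cand -> [/\ A p.1, p.2 \in F p.1 & zf p.1 p.2 != 0].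
  move=> p; rewrite mem_filter => /andP [hz /allpairsPdep [i [v [hi hv e]]]].
  by rewrite e /= in hz *; rewrite mem_enum in hi; split.
have key : forall i v, zf i v != 0 -> (i, v) \in Cand.
  move=> i v hz; case/boolP: (A i && (v \in F i)) => [/andP [hA hv]|hn].
    exact: memC.
  by move: hz; rewrite /zf z_out // eqxx.
pose rho (p : 'I_N * 'rV[R]_d) := if 0 < zf p.1 p.2 then (1 - y p.1 p.2) / zf p.1 p.2
  else - y p.1 p.2 / zf p.1 p.2.
have rho_z : forall p, zf p.1 p.2 != 0 -> rho p * zf p.1 p.2 =
    if 0 < zf p.1 p.2 then 1 - y p.1 p.2 else - y p.1 p.2.
  by move=> p hz; rewrite /rho; case: ifP => _; exact: divfK.
have rho_pos : forall p, p \in Cand -> 0 < rho p.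
  move=> p /memC' [hA hv hz]; move: hv; rewrite mem_filter => /andP [/andP [f0 f1] _].
  rewrite /rho; case: ifP => hp.
    by apply: divr_gt0 => //; rewrite subr_gt0.
  have hn : zf p.1 p.2 < 0 by rewrite lt_neqAle hz /= leNgt hp.
  by rewrite mulNr -mulrN -invrN; apply: divr_gt0 => //; rewrite oppr_gt0.
have [ps [hps hmin]] := seq_argmin rho (memC _ _ hA0 hF0 hz0).
have ht : 0 < rho ps := rho_pos _ hps.
pose y' i v := y i v + rho ps * zf i v.
have sub : forall i v, frac (y' i v) -> frac (y i v).
  move=> i v; case/boolP: (zf i v == 0) => [/eqP hz|hz].
    by rewrite /y' hz mulr0 addr0.
  by have [_ + _] := memC' _ (key _ _ hz); rewrite mem_filter => /andP [].
exists y'; split.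
- move=> i v vT; rewrite /y'; have /andP [h0 h1] := hb vT.
  case/boolP: (zf i v == 0) => [/eqP ->|hz]; first by rewrite mulr0 addr0 h0 h1.
  have hle := hmin _ (key _ _ hz).
  move: (rho_z (i, v) hz) hle => /=; case: ifP => hp e hle.
    have : rho ps * zf i v <= rho (i, v) * zf i v by rewrite ler_pM2r.
    have : 0 <= rho ps * zf i v by rewrite mulr_ge0 // ltW.
    rewrite e => ha hc; apply/andP; split; lra.
  have hn : zf i v < 0 by rewrite lt_neqAle hz /= leNgt hp.
  have : rho (i, v) * zf i v <= rho ps * zf i v by rewrite ler_nM2r.
  have : rho ps * zf i v <= 0 by rewrite mulr_ge0_le0 // ltW.
  rewrite e => ha hc; apply/andP; split; lra.
- move=> i; rewrite /y' big_split /= -mulr_sumr /zf z_row mulr0 addr0; exact: hr.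
- rewrite /wsum (eq_bigr (fun i => \sum_(v <- T i) y i v *: g i v +
     rho ps *: \sum_(v <- T i) zf i v *: g i v)); last first.
    move=> i _; rewrite scaler_sumr -big_split; apply: eq_bigr => v _.
    by rewrite /y' scalerDl scalerA.
  by rewrite big_split /= -scaler_sumr /zf (z_w hk) scaler0 addr0.
- move=> i v vT h; rewrite /y' /zf z_out ?mulr0 ?addr0 //.
  apply/negP => /andP [hA]; rewrite mem_filter => /andP [hfr _].
  by move: h; rewrite hA hfr.
have [hAs hvs hzs] := memC' ps hps.
have hvsT : ps.2 \in T ps.1 by move: hvs; rewrite mem_filter => /andP [].
have hfs : frac (y ps.1 ps.2) by move: hvs; rewrite mem_filter => /andP [].
have hnf : ~~ frac (y' ps.1 ps.2).
  rewrite /y' (rho_z ps hzs); case: ifP => _; rewrite /frac.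
    by rewrite addrC subrK ltxx andbF.
  by rewrite subrr ltxx.
rewrite /fc (bigD1 (F := fun i => count (fun v => frac (y' i v)) (T i)) ps.1) //=.
rewrite (bigD1 (F := fun i => count (fun v => frac (y i v)) (T i)) ps.1) //=.
have h1 := count_lt (a := fun v => frac (y' ps.1 v)) (b := fun v => frac (y ps.1 v))
  (sub ps.1) hvsT hfs hnf.
have h2 : (\sum_(i < N | A i && (i != ps.1)) count (fun v => frac (y' i v)) (T i) <=
  \sum_(i < N | A i && (i != ps.1)) count (fun v => frac (y i v)) (T i))%N.
  by apply: leq_sum => i _; apply: sub_count => v; exact: sub.
by rewrite -addSn; apply: leq_add.
Qed.

End Step.

Lemma round_exists D (A : pred 'I_N) (g : 'I_N -> 'rV[R]_d -> 'rV[R]_D) y :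
  boxP y -> rowsP y -> exists y', [/\ boxP y', rowsP y',
  wsum A g y' = wsum A g y, refines A y' y & (fc A y' <= 2 * D)%N].
Proof.
have [m] := ubnP (fc A y); elim: m y => // m IH y hm hb hr.
case: (leqP (fc A y) (2 * D)) => h.
  by exists y; split => // i v _ _.
have [y1 [hb1 hr1 hw1 hf1 hl1]] := step_exists g hb hr h.
have [y2 [hb2 hr2 hw2 hf2 hl2]] := IH y1 (leq_trans hl1 hm) hb1 hr1.
exists y2; split => //; first by rewrite hw2.
move=> i v vT h'; rewrite hf2 ?hf1 //.
Qed.

End Round.

Lemma sum_const_seq (R : realType) (X : Type) (l : seq X) (c : R) :
  \sum_(v <- l) c = c *+ size l.
Proof. by elim: l => [|a l IH]; rewrite ?big_nil ?big_cons ?IH ?mulrS. Qed.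

Lemma sum_count (R : realType) (X : Type) (l : seq X) (a : pred X) :
  \sum_(v <- l) (a v)%:R = (count a l)%:R :> R.
Proof.
elim: l => [|c l IH]; first by rewrite big_nil.
by rewrite big_cons IH /= natrD.
Qed.

Section Norm.
Variable R : realType.
Variable d : nat.
Variable nrm : 'rV[R]_d -> R.
Hypothesis hn : is_norm nrm.

Lemma nrm_ge0 v : 0 <= nrm v.
Proof. by case: hn. Qed.

Lemma nrmZ a v : nrm (a *: v) = `|a| * nrm v.
Proof. by case: hn. Qed.

Lemma nrm0 : nrm 0 = 0.
Proof. by rewrite -(scale0r (0 : 'rV[R]_d)) nrmZ normr0 mul0r. Qed.

Lemma nrmN v : nrm (- v) = nrm v.
Proof. by rewrite -scaleN1r nrmZ normrN normr1 mul1r. Qed.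

Lemma nrmD u v : nrm (u + v) <= nrm u + nrm v.
Proof. by case: hn. Qed.

Lemma nrm_sum (I : Type) (r : seq I) (P : pred I) (f : I -> 'rV[R]_d) :
  nrm (\sum_(i <- r | P i) f i) <= \sum_(i <- r | P i) nrm (f i).
Proof.
apply: (big_ind2 (fun x y => nrm x <= y)); first by rewrite nrm0.
  by move=> a b c e h1 h2; apply: le_trans (nrmD _ _) _; exact: lerD.
by [].
Qed.

End Norm.

Lemma split_last (V : zmodType) N k (hk : (k < N)%N) (F : 'I_N -> V) :
  \sum_(i < N | (i < k.+1)%N) F i = \sum_(i < N | (i < k)%N) F i + F (Ordinal hk).
Proof.
rewrite (bigD1 (Ordinal hk)) //= addrC; congr (_ + _).
by apply: eq_bigl => i; rewrite -(inj_eq val_inj) /= ltnS ltn_neqAle andbC.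
Qed.

Lemma fset_card_pos (R : realType) d (A : {fset 'rV[R]_d}) v : v \in A -> (0 < #|` A|)%N.
Proof. by move=> h; move: (h : v \in enum_fset A); case: (enum_fset A). Qed.

Lemma subset_lemma (R : realType) d N (nrm : 'rV[R]_d -> R)
  (T : 'I_N -> {fset 'rV[R]_d}) (s : 'I_N -> nat) :
  is_norm nrm -> (forall i v, v \in T i -> nrm v <= 1) ->
  (forall i, (s i <= #|` T i|)%N) ->
  exists S : 'I_N -> {fset 'rV[R]_d}, (forall i, (S i `<=` T i)%fset /\ #|` S i| = s i) /\
   forall n : 'I_N, nrm (\sum_(i < N | (i <= n)%N)
     ((\sum_(v <- S i) v) - (s i)%:R *: fset_mean (T i))) <= 2 * d%:R.
Proof.
move=> hn hT hs.
pose u i : R := (s i)%:R / (#|` T i|)%:R.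
pose tgt k := \sum_(i < N | (i < k)%N) (s i)%:R *: fset_mean (T i).
pose E k (y : 'I_N -> 'rV[R]_d -> R) := forall ys : 'I_N -> 'rV[R]_d -> R,
   (forall (i : 'I_N) v, (i < k)%N -> v \in T i -> (ys i v == 0) || (ys i v == 1)) ->
   (forall (i : 'I_N) v, (i < k)%N -> v \in T i -> ~~ frac (y i v) -> ys i v = y i v) ->
   forall j, (j <= k)%N -> nrm (\sum_(i < N | (i < j)%N)
     (\sum_(v <- T i) ys i v *: v - (s i)%:R *: fset_mean (T i))) <= 2 * d%:R.
have rowu : forall i, \sum_(v <- T i) u i *: v = (s i)%:R *: fset_mean (T i).
  by move=> i; rewrite -scaler_sumr /fset_mean scalerA.
have h2d : 0 <= 2 * d%:R :> R by rewrite mulr_ge0 // ler0n.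
have claim : forall k, (k <= N)%N -> exists y, [/\ boxP T y, rowsP T s y,
   wsum T (fun i => (i < k)%N) (fun _ v => v) y = tgt k,
   (forall (i : 'I_N) v, (k <= i)%N -> v \in T i -> y i v = u i) &
   (fc T (fun i => (i < k)%N) y <= 2 * d)%N] /\ E k y.
  elim => [_|k IH hk].
  - exists (fun i _ => u i); split; [split|].
    + move=> i v vT; rewrite /u; have hT0 := fset_card_pos vT.
      have hT0' : 0 < (#|` T i|)%:R :> R by rewrite ltr0n.
      rewrite divr_ge0 ?ler0n //= ler_pdivrMr // mul1r ler_nat; exact: hs.
    + move=> i; rewrite sum_const_seq /u.
      case: (posnP #|` T i|) => h0.
        by move: (hs i); rewrite h0 leqn0 => /eqP ->; rewrite !mul0r mul0rn.
      by rewrite -[_ *+ #|` T i|]mulr_natr -mulrA mulVf ?mulr1 // pnatr_eq0 -lt0n h0.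
    + by rewrite /wsum /tgt !(big_pred0 _ _ _ _ (fun i : 'I_N => ltn0 i)).
    + by [].
    + by rewrite /fc (big_pred0 _ _ _ _ (fun i : 'I_N => ltn0 i)).
    + move=> ys _ _ j; rewrite leqn0 => /eqP ->; rewrite (big_pred0 _ _ _ _ (fun i : 'I_N => ltn0 i)) nrm0 //.
  - have [y [[hb hr hw hu hf] hE]] := IH (ltnW hk).
    pose A := fun i : 'I_N => (i < k.+1)%N.
    have [y' [hb' hr' hw' hf' hl']] := round_exists A (fun _ v => v) hb hr.
    have hwA : wsum T A (fun _ v => v) y = tgt k.+1.
      rewrite /wsum /tgt /A !(split_last hk); congr (_ + _); first exact: hw.
      rewrite -rowu; apply: eq_big_seq => v vT; rewrite hu //.
    exists y'; split; [split|].
    + exact: hb'.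
    + exact: hr'.
    + by rewrite hw' hwA.
    + move=> i v hki vT; rewrite hf' //; first by apply: hu => //; exact: ltnW.
      by rewrite /A -leqNgt hki.
    + exact: hl'.
    + move=> ys hys href j hj.
      case: (ltnP j k.+1) hj => [hjk _| hjk hj].
        apply: hE => //.
          by move=> i v hi vT; apply: hys => //; exact: ltnW.
        move=> i v hi vT hnf.
        have e : y' i v = y i v by apply: hf' => //; rewrite hnf orbT.
        by rewrite -e; apply: href => //; [exact: ltnW | rewrite e].
      have -> : j = k.+1 by apply/eqP; rewrite eqn_leq hj hjk.
      rewrite sumrB -/(tgt k.+1) -hwA -hw' /wsum -sumrB.
      apply: le_trans (nrm_sum hn _ _ _) _.
      apply: (@le_trans _ _ (\sum_(i < N | A i) (count (fun v => frac (y' i v)) (T i))%:R)).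
        apply: ler_sum => i hi; rewrite -sumrB -sum_count.
        under eq_bigr do rewrite -scalerBl.
        apply: le_trans (nrm_sum hn _ _ _) _; rewrite big_seq [X in _ <= X]big_seq.
        apply: ler_sum => v vT; rewrite nrmZ //.
        have hv1 := hT _ _ vT; have hv0 := nrm_ge0 hn v.
        case/boolP: (frac (y' i v)) => hfv; last first.
          by rewrite href // subrr normr0 mul0r.
          rewrite (_ : true%:R = 1 :> R) //.
          have /orP [] := hys i v hi vT => /eqP ->; move: hfv; rewrite /frac => /andP [f0 f1].
            rewrite sub0r normrN gtr0_norm //.
            by apply: le_trans (ler_wpM2r hv0 (ltW f1)) _; rewrite mul1r.
          rewrite ger0_norm; last by rewrite subr_ge0 ltW.
          have h1y : 1 - y' i v <= 1 by lra.
          by apply: le_trans (ler_wpM2r hv0 h1y) _; rewrite mul1r.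
      by rewrite -natr_sum -natrM ler_nat.
have [y [[hb hr _ _ _] hE]] := claim N (leqnn N).
have [ys [hbs hrs _ hfs hls]] := round_exists predT
  (fun _ _ => (0 : 'rV[R]_0)) hb hr.
have h01 : forall i v, v \in T i -> (ys i v == 0) || (ys i v == 1).
  move=> i v vT.
  have hc : count (fun v => frac (ys i v)) (T i) = 0%N.
    move: hls; rewrite /fc (bigD1 i) //= => h; apply/eqP; rewrite -leqn0.
    exact: leq_trans (leq_addr _ _) h.
  have : ~~ frac (ys i v).
    have : ~~ has (fun v => frac (ys i v)) (T i) by rewrite has_count hc.
    by move/hasPn; apply.
  have /andP [h0 h1] := hbs _ _ vT; rewrite /frac negb_and -!leNgt.
  by case/orP => h; apply/orP; [left|right]; rewrite eq_le ?h0 ?h1 h.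
exists (fun i => seq_fset tt [seq v <- T i | ys i v == 1]); split.
  move=> i; split.
    by apply/fsubsetP => v; rewrite seq_fsetE mem_filter => /andP [].
  rewrite size_seq_fset undup_id ?filter_uniq ?fset_uniq // size_filter.
  apply/eqP; rewrite -(@eqr_nat R) -(hrs i) -sum_count; apply/eqP.
  apply: eq_big_seq => v vT; case/orP: (h01 i v vT) => /eqP ->.
    by rewrite eq_sym oner_eq0.
  by rewrite eqxx.
move=> n.
have := hE ys (fun i v _ vT => h01 i v vT) (fun i v _ vT hnf => hfs i v vT hnf)
  n.+1 (ltn_ord n).
apply: le_trans; rewrite le_eqVlt; apply/orP; left; apply/eqP; congr (nrm _).
apply: eq_bigr => i _; congr (_ - _).
rewrite (perm_big _ (seq_fset_perm _ _)) undup_id ?filter_uniq ?fset_uniq //.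
rewrite big_filter big_mkcond; apply: eq_big_seq => v vT.
by case/orP: (h01 i v vT) => /eqP ->; rewrite ?scale0r ?scale1r ?eqxx // eq_sym oner_eq0.
Qed.

Definition Bnd (R : realType) (s : nat) : R :=
  if (s <= 1)%N then 0 else 5%:R / 2%:R - (s.-1)%:R^-1 - s%:R^-1.

Lemma Bnd_ge0 (R : realType) s : 0 <= Bnd R s.
Proof.
rewrite /Bnd; case: ifP => // /negbT; rewrite -ltnNge => h.
have h1 : (s.-1)%:R^-1 <= 1 :> R.
  by rewrite invf_le1 ?ler1n ?ltr0n; lia.
have h2 : s%:R^-1 <= 1 :> R.
  by rewrite invf_le1 ?ler1n ?ltr0n; lia.
lra.
Qed.

Lemma Bnd_rec (R : realType) (s sj : nat) : (2 <= s)%N -> (1 <= sj)%N ->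
  (2 * sj <= s + 1)%N -> sj%:R^-1 + Bnd R sj <= Bnd R s.
Proof.
move=> hs hsj h2.
have hs1 : (s <= 1)%N = false by apply/negbTE; rewrite -ltnNge.
rewrite /Bnd hs1.
have ha : 1 <= (s.-1)%:R :> R by rewrite ler1n; lia.
have hb : (s%:R : R) = (s.-1)%:R + 1 by rewrite natr1 prednK //; lia.
have hab : s%:R^-1 <= (s.-1)%:R^-1 :> R.
  by rewrite lef_pV2 ?posrE ?ltr0n ?ler_nat; lia.
have ha1 : (s.-1)%:R^-1 <= 1 :> R by rewrite invf_le1 ?ler1n ?ltr0n; lia.
case: ifP => hsj1.
  have -> : sj = 1%N by lia.
  rewrite invr1 addr0.
  have : s%:R^-1 <= 2%:R^-1 :> R by rewrite lef_pV2 ?posrE ?ltr0n ?ler_nat; lia.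
  have : 2%:R^-1 * 2%:R = 1 :> R by rewrite mulVf // pnatr_eq0.
  have : 5%:R / 2%:R = (5%:R : R) * 2%:R^-1 by [].
  move=> e5 e2 h; rewrite e5.
  lra.
have hc : (2 * sj.-1 <= s.-1)%N by lia.
have hc' : (2 : R) * (sj.-1)%:R <= (s.-1)%:R.
  by rewrite -natrM ler_nat.
have hcp : 0 < (sj.-1)%:R :> R by rewrite ltr0n; lia.
have hk : (s.-1)%:R^-1 * 2 <= (sj.-1)%:R^-1 :> R.
  have ha0 : (s.-1)%:R != 0 :> R by rewrite pnatr_eq0; lia.
  have hc0 : (sj.-1)%:R != 0 :> R by rewrite pnatr_eq0; lia.
  rewrite -(@ler_pM2r _ ((s.-1)%:R * (sj.-1)%:R)); last by rewrite mulr_gt0 // ltr0n; lia.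
  have -> : (s.-1)%:R^-1 * 2 * ((s.-1)%:R * (sj.-1)%:R) = 2 * (sj.-1)%:R :> R.
    by field.
  have -> : (sj.-1)%:R^-1 * ((s.-1)%:R * (sj.-1)%:R) = (s.-1)%:R :> R.
    by field.
  exact hc'.
lra.
Qed.

Lemma mean1 (R : realType) d (A : {fset 'rV[R]_d}) :
  #|` A| = 1%N -> head 0 (enum_fset A) \in A /\ fset_mean A = head 0 (enum_fset A).
Proof.
rewrite /fset_mean; move: (fset_uniq A) => _.
have hm : forall w, w \in enum_fset A -> w \in A by [].
case e: (enum_fset A) hm => [|w [|w' l]] //= hm _.
split; first by apply: hm; rewrite mem_head.
by rewrite big_seq1 /= invr1 scale1r.
Qed.

Lemma sum_fsetD (R : realType) d (A B : {fset 'rV[R]_d}) (f : 'rV[R]_d -> 'rV[R]_d) :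
  (B `<=` A)%fset ->
  \sum_(v <- A) f v = \sum_(v <- B) f v + \sum_(v <- (A `\` B)%fset) f v.
Proof.
move=> hBA; rewrite (big_fsetID _ (mem B)) /=; congr (_ + _); apply: eq_fbigl => x.
  rewrite !inE /=; case hx: (x \in B); last by rewrite andbF.
  by rewrite (fsubsetP hBA x hx).
by rewrite !inE /= andbC.
Qed.

Lemma exact_lemma (R : realType) d N (nrm : 'rV[R]_d -> R) : is_norm nrm ->
  forall s (T : 'I_N -> {fset 'rV[R]_d}), (forall i, #|` T i| = s) ->
  (forall i v, v \in T i -> nrm v <= 1) ->
  exists chi : 'I_N -> nat -> 'rV[R]_d,
   [/\ forall i l, (l < s)%N -> chi i l \in T i,
       forall i l l', (l < s)%N -> (l' < s)%N -> chi i l = chi i l' -> l = l' &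
       forall (n : 'I_N) l, (l < s)%N ->
         nrm (\sum_(i < N | (i <= n)%N) (chi i l - fset_mean (T i)))
           <= 2 * d%:R * Bnd R s].
Proof.
move=> hn s; elim/ltn_ind: s => s IH T hTs hT.
have h2d : 0 <= 2 * d%:R :> R by rewrite mulr_ge0 // ler0n.
case: (ltnP s 2) => hs2.
  case: s IH hTs hs2 => [|[|//]] IH hTs _.
    by exists (fun _ _ => 0); split.
  exists (fun i _ => head 0 (enum_fset (T i))); split.
  - by move=> i l _; have [] := mean1 (hTs i).
  - by move=> i l l'; rewrite !ltnS !leqn0 => /eqP -> /eqP ->.
  - move=> n l _; rewrite big1 ?nrm0 // /Bnd /= ?mulr0 //.
    by move=> i _; have [_ ->] := mean1 (hTs i); exact: subrr.
have [s1 [s2 [hsum h2 h21 h1]]] : exists s1 s2, [/\ (s1 + s2 = s)%N, (1 <= s2)%N,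
    (s2 <= s1)%N & (2 * s1 <= s + 1)%N].
  by exists (s - s %/ 2)%N, (s %/ 2)%N; split; lia.
have hsT : forall i, ((fun _ => s1) i <= #|` T i|)%N by move=> i; rewrite hTs; lia.
have [U [hU herrU]] := subset_lemma hn hT hsT.
pose W i := (T i `\` U i)%fset.
have hUc : forall i, #|` U i| = s1 by move=> i; case: (hU i).
have hUT : forall i v, v \in U i -> v \in T i by move=> i v; apply/fsubsetP; case: (hU i).
have hWc : forall i, #|` W i| = s2.
  by move=> i; rewrite cardfsDS ?hTs ?hUc; [lia | case: (hU i)].
have hWT : forall i v, v \in W i -> v \in T i.
  by move=> i v; rewrite in_fsetD => /andP [].
have hWU : forall i v, v \in W i -> v \notin U i.
  by move=> i v; rewrite in_fsetD => /andP [].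
have [chi1 [m1 inj1 e1]] := IH s1 ltac:(lia) U hUc (fun i v hv => hT i v (hUT i v hv)).
have [chi2 [m2 inj2 e2]] := IH s2 ltac:(lia) W hWc (fun i v hv => hT i v (hWT i v hv)).
exists (fun i l => if (l < s1)%N then chi1 i l else chi2 i (l - s1)%N); split.
- move=> i l hl; case: ifP => hl1; first exact/hUT/m1.
  by apply/hWT/m2; lia.
- move=> i l l' hl hl'; case: ifP => hl1; case: ifP => hl1'.
  + exact: inj1.
  + move=> e; have := m1 i l hl1; rewrite e => hu.
    by have := hWU i _ (m2 i (l' - s1)%N ltac:(lia)); rewrite hu.
  + move=> e; have := m1 i l' hl1'; rewrite -e => hu.
    by have := hWU i _ (m2 i (l - s1)%N ltac:(lia)); rewrite hu.
  + move/negbT: hl1 => hl1; move/negbT: hl1' => hl1'; rewrite -!leqNgt in hl1 hl1'.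
    move=> e; have := inj2 i (l - s1)%N (l' - s1)%N ltac:(lia) ltac:(lia) e; lia.
have hs1p : 0 < s1%:R :> R by rewrite ltr0n; lia.
have hs2p : 0 < s2%:R :> R by rewrite ltr0n; lia.
have mUe : forall i, fset_mean (U i) = s1%:R^-1 *: \sum_(v <- U i) v.
  by move=> i; rewrite /fset_mean hUc.
move=> n l hl; case hl1: (l < s1)%N => /=.
  have -> : \sum_(i < N | (i <= n)%N) (chi1 i l - fset_mean (T i)) =
     \sum_(i < N | (i <= n)%N) (chi1 i l - fset_mean (U i)) +
     s1%:R^-1 *: \sum_(i < N | (i <= n)%N)
        (\sum_(v <- U i) v - s1%:R *: fset_mean (T i)).
    rewrite scaler_sumr -big_split; apply: eq_bigr => i _.
    rewrite mUe scalerBr scalerA mulVf ?scale1r ?gt_eqF //.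
    by rewrite /= addrA subrK.
  apply: le_trans (nrmD hn _ _) _.
  rewrite nrmZ // ger0_norm ?invr_ge0 ?ler0n //.
  have hB := Bnd_rec R (sj := s1) hs2 ltac:(lia) h1.
  have := ler_wpM2l h2d hB; rewrite mulrDr => hB'.
  have hb := e1 n l hl1; have ha := herrU n.
  have hi : 0 <= s1%:R^-1 :> R by rewrite invr_ge0 ler0n.
  have hc := ler_wpM2l hi ha.
  apply: le_trans (lerD hb hc) _; apply: le_trans _ hB'.
  by rewrite addrC [s1%:R^-1 * _]mulrC.

have hl2 : (l - s1 < s2)%N by lia.
have hWs : forall i, \sum_(v <- W i) v = s%:R *: fset_mean (T i) - \sum_(v <- U i) v.
  move=> i; have := sum_fsetD id (proj1 (hU i)); rewrite -/(W i) => e.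
  rewrite /fset_mean hTs scalerA mulfV ?scale1r; last by rewrite pnatr_eq0; lia.
  by rewrite e addrAC subrr add0r.
have -> : \sum_(i < N | (i <= n)%N) (chi2 i (l - s1)%N - fset_mean (T i)) =
   \sum_(i < N | (i <= n)%N) (chi2 i (l - s1)%N - fset_mean (W i)) +
   (- s2%:R^-1) *: \sum_(i < N | (i <= n)%N)
      (\sum_(v <- U i) v - s1%:R *: fset_mean (T i)).
  rewrite scaler_sumr -big_split; apply: eq_bigr => i _.
  have -> : fset_mean (W i) = s2%:R^-1 *: \sum_(v <- W i) v by rewrite /fset_mean hWc.
  rewrite hWs -hsum natrD /=.
  set m := fset_mean (T i); set a := \sum_(v <- U i) v.
  have hp : s2%:R^-1 *: ((s1%:R + s2%:R) *: m) = (s2%:R^-1 * s1%:R) *: m + m.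
    by rewrite scalerA mulrDr mulVf ?gt_eqF // scalerDl scale1r.
  have hr : (- s2%:R^-1) *: (a - s1%:R *: m) = (s2%:R^-1 * s1%:R) *: m - s2%:R^-1 *: a.
    by rewrite scalerBr !scaleNr opprK scalerA addrC.
  rewrite scalerBr hp hr.
  set x := (s2%:R^-1 * s1%:R) *: m; set c := chi2 i (l - s1)%N.
  set q := s2%:R^-1 *: a.
  by rewrite (addrAC x m (-q)) opprD (addrA c) (addrAC (c - (x - q))) subrK.
apply: le_trans (nrmD hn _ _) _.
rewrite nrmZ // normrN ger0_norm ?invr_ge0 ?ler0n //.
have hB := Bnd_rec R hs2 h2 ltac:(lia).
have := ler_wpM2l h2d hB; rewrite mulrDr => hB'.
have hb := e2 n (l - s1)%N hl2; have ha := herrU n.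
have hi : 0 <= s2%:R^-1 :> R by rewrite invr_ge0 ler0n.
have hc := ler_wpM2l hi ha.
apply: le_trans (lerD hb hc) _; apply: le_trans _ hB'.
by rewrite addrC [s2%:R^-1 * _]mulrC.
Qed.

Lemma Bnd_final (R : realType) r : (1 <= r)%N -> r%:R^-1 + Bnd R r <= 5%:R / 2%:R.
Proof.
move=> hr; rewrite /Bnd; case: ifP => h.
  have -> : r = 1%N by lia.
  by rewrite invr1 addr0 ler_pdivlMr ?ltr0n // mul1r ler_nat.
have : 0 <= (r.-1)%:R^-1 :> R by rewrite invr_ge0 ler0n.
lra.
Qed.

Unset Implicit Arguments.

Theorem theorem4 (R : realType) (d N r : nat) (nrm : 'rV[R]_d -> R)
  (V : 'I_N -> {fset 'rV[R]_d}) :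
  (0 < d)%N -> (0 < N)%N -> (0 < r)%N ->
  is_norm nrm ->
  (forall i : 'I_N, forall v : 'rV[R]_d, v \in V i -> nrm v <= 1) ->
  (forall i : 'I_N, (r <= #|` V i|)%N) ->
  exists chi : 'I_N -> 'I_r -> 'rV[R]_d,
    r_selection V chi /\
    forall (n : 'I_N) (l : 'I_r),
      nrm (\sum_(i : 'I_N | (i <= n)%N) (chi i l - fset_mean (V i)))
        <= 5 * d%:R.
Proof.
move=> hd hN hr hn hV hVr.
have h2d : 0 <= 2 * d%:R :> R by rewrite mulr_ge0 // ler0n.
have hsT : forall i, ((fun _ => r) i <= #|` V i|)%N by move=> i; exact: hVr.
have [U [hU herrU]] := subset_lemma hn hV hsT.
have hUc : forall i, #|` U i| = r by move=> i; case: (hU i).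
have hUT : forall i v, v \in U i -> v \in V i by move=> i v; apply/fsubsetP; case: (hU i).
have [chi0 [m0 inj0 e0]] := exact_lemma hn hUc (fun i v hv => hV i v (hUT i v hv)).
exists (fun i (l : 'I_r) => chi0 i l); split.
  move=> i; split; last by move=> l; exact/hUT/m0.
  by move=> a b h; apply: val_inj; exact: inj0 i a b (ltn_ord a) (ltn_ord b) h.
move=> n l.
have hrp : 0 < r%:R :> R by rewrite ltr0n.
have mUe : forall i, fset_mean (U i) = r%:R^-1 *: \sum_(v <- U i) v.
  by move=> i; rewrite /fset_mean hUc.
have -> : \sum_(i < N | (i <= n)%N) (chi0 i l - fset_mean (V i)) =
   \sum_(i < N | (i <= n)%N) (chi0 i l - fset_mean (U i)) +
   r%:R^-1 *: \sum_(i < N | (i <= n)%N)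
      (\sum_(v <- U i) v - r%:R *: fset_mean (V i)).
  rewrite scaler_sumr -big_split; apply: eq_bigr => i _.
  rewrite mUe scalerBr scalerA mulVf ?scale1r ?gt_eqF //.
  by rewrite /= addrA subrK.
apply: le_trans (nrmD hn _ _) _.
rewrite nrmZ // ger0_norm ?invr_ge0 ?ler0n //.
have hb := e0 n l (ltn_ord l); have ha := herrU n.
have hi : 0 <= r%:R^-1 :> R by rewrite invr_ge0 ler0n.
have hc := ler_wpM2l hi ha.
apply: le_trans (lerD hb hc) _.
have hF := ler_wpM2l h2d (Bnd_final R hr).
rewrite mulrDr in hF.
have e5 : 2 * d%:R * (5%:R / 2%:R) = 5 * d%:R :> R.
  by rewrite mulrAC mulrCA mulfV ?mulr1 // pnatr_eq0.
rewrite -e5; apply: le_trans _ hF.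
by rewrite addrC [r%:R^-1 * _]mulrC.
Qed.
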